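(* Let $\mathbb{M}(\mathbb{B})=\{F_A:A\in\mathrm{Sp}(1,1)\}$ and $\mathcal{M}(\mathbb{B})=\{\mathcal{F}_A:A\in\mathrm{Sp}(1,1)\}$. The set $\mathbb{M}(\mathbb{B})\cap\mathcal{M}(\mathbb{B})$ is the collection of transformations given by the following actions: (1) the right action of $\mathrm{SO}_0(1,1)$ on $\mathbb{B}$ by classical Möbius transformations, $q\mapsto F_{H}(q)$ for $H\in\mathrm{SO}_0(1,1)$; (2) the right action of $\mathrm{Sp}(1)$ on $\mathbb{B}$ given by $q\cdot u=qu$. That is, $\mathbb{M}(\mathbb{B})\cap\mathcal{M}(\mathbb{B})=\{q\mapsto F_H(q)u: H\in\mathrm{SO}_0(1,1),\ u\in\mathrm{Sp}(1)\}$.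
   Context: $\mathbb{H}$ denotes the quaternions, $\mathbb{B}=\{q\in\mathbb{H}:|q|<1\}$, $\mathrm{Sp}(1)=\{u\in\mathbb{H}:|u|=1\}$. Let $I_{1,1}=\operatorname{diag}(1,-1)$ and $\mathrm{Sp}(1,1)=\{A\in M_2(\mathbb{H}):A^*I_{1,1}A=I_{1,1}\}$. For $t\in\mathbb{R}$, $H(t)=\begin{pmatrix}\cosh t&\sinh t\\ \sinh t&\cosh t\end{pmatrix}$ and $\mathrm{SO}_0(1,1)=\{H(t):t\in\mathbb{R}\}$. For $A=\begin{pmatrix}a&c\\ b&d\end{pmatrix}\in\mathrm{Sp}(1,1)$, the classical Möbius transformation is $F_A(q)=(qc+d)^{-1}(qa+b)$. Slice regular functions on $\mathbb{B}$ are exactly the functions $f(q)=\sum_{n\ge0}q^na_n$ ($a_n\in\mathbb{H}$) with the series converging on $\mathbb{B}$. The $*$-product is $(\sum q^na_n)*(\sum q^nb_n)=\sum_n q^n\sum_{k=0}^n a_kb_{n-k}$; $f^c(q)=\sum q^n\overline{a_n}$, $f^s=f*f^c$, $f^{-*}=(f^s)^{-1}f^c$ (pointwise, off the zero set of $f^s$). For $a,b\in\mathbb{H}$ let $\ell_{a,b}(q)=qa+b$. For $A=\begin{pmatrix}a&c\\ b&d\end{pmatrix}\in\mathrm{Sp}(1,1)$, the regular Möbius transformation is $\mathcal{F}_A=\ell_{c,d}^{-*}*\ell_{a,b}$, which maps $\mathbb{B}$ diffeomorphically onto $\mathbb{B}$. *)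

(* Defs.v *)
From Stdlib Require Import Reals Lra List.
Open Scope R_scope.

Record quat : Type := Quat { qr : R; qi : R; qj : R; qk : R }.

Definition qadd (p q : quat) : quat :=
  Quat (qr p + qr q) (qi p + qi q) (qj p + qj q) (qk p + qk q).
Definition qopp (p : quat) : quat := Quat (- qr p) (- qi p) (- qj p) (- qk p).
Definition qsub (p q : quat) : quat := qadd p (qopp q).
(* Hamilton product: i^2 = j^2 = k^2 = ijk = -1 *)
Definition qmul (p q : quat) : quat :=
  Quat (qr p * qr q - qi p * qi q - qj p * qj q - qk p * qk q)
       (qr p * qi q + qi p * qr q + qj p * qk q - qk p * qj q)
       (qr p * qj q - qi p * qk q + qj p * qr q + qk p * qi q)
       (qr p * qk q + qi p * qj q - qj p * qi q + qk p * qr q).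
Definition qconj (p : quat) : quat := Quat (qr p) (- qi p) (- qj p) (- qk p).
Definition qnorm2 (p : quat) : R := qr p ^ 2 + qi p ^ 2 + qj p ^ 2 + qk p ^ 2.
Definition qnorm (p : quat) : R := sqrt (qnorm2 p).
Definition qofR (x : R) : quat := Quat x 0 0 0.
Definition q0 : quat := qofR 0.
Definition q1 : quat := qofR 1.
(** multiplicative inverse p^{-1} = conj p / |p|^2 (the value at 0 is irrelevant) *)
Definition qinv (p : quat) : quat := qmul (qofR (/ qnorm2 p)) (qconj p).
Fixpoint qpow (q : quat) (n : nat) : quat :=
  match n with O => q1 | S m => qmul (qpow q m) q end.

Definition inB (q : quat) : Prop := qnorm q < 1.
Definition inSp1 (u : quat) : Prop := qnorm u = 1.

(** * Sp(1,1).  A matrix A = [[a, c], [b, d]] in M_2(H) is represented by its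
    four entries.  A^* = [[conj a, conj b], [conj c, conj d]], and
    A^* I_{1,1} A = I_{1,1} written entrywise. *)
Definition inSp11 (a b c d : quat) : Prop :=
  qsub (qmul (qconj a) a) (qmul (qconj b) b) = q1 /\
  qsub (qmul (qconj a) c) (qmul (qconj b) d) = q0 /\
  qsub (qmul (qconj c) a) (qmul (qconj d) b) = q0 /\
  qsub (qmul (qconj c) c) (qmul (qconj d) d) = qopp q1.

Definition mobF (a b c d : quat) (q : quat) : quat :=
  qmul (qinv (qadd (qmul q c) d)) (qadd (qmul q a) b).

Definition mobH (t : R) (q : quat) : quat :=
  mobF (qofR (cosh t)) (qofR (sinh t)) (qofR (sinh t)) (qofR (cosh t)) q.

Fixpoint psum (a : nat -> quat) (q : quat) (N : nat) : quat :=
  match N with O => q0 | S M => qadd (psum a q M) (qmul (qpow q M) (a M)) end.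

Definition series_to (a : nat -> quat) (q L : quat) : Prop :=
  Un_cv (fun N => qnorm (qsub (psum a q N) L)) 0.

Fixpoint qsum (f : nat -> quat) (n : nat) : quat :=
  match n with O => q0 | S m => qadd (qsum f m) (f m) end.

Definition star (a b : nat -> quat) : nat -> quat :=
  fun n => qsum (fun k => qmul (a k) (b (n - k)%nat)) (S n).

Definition cconj (a : nat -> quat) : nat -> quat := fun n => qconj (a n).

(** coefficients of l_{a,b}(q) = q a + b *)
Definition lin (a b : quat) : nat -> quat :=
  fun n => match n with O => b | S O => a | _ => q0 end.

Definition lin_s (c d : quat) : nat -> quat := star (lin c d) (cconj (lin c d)).

(** l_{c,d}^{-*}(q) = (l^s(q))^{-1} l^c(q), pointwise.  Since l^s has degree <= 2
    and l^c degree <= 1, their values are the finite sums with 3 resp. 2 terms. *)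
Definition lin_sinv (c d : quat) (q : quat) : quat :=
  qmul (qinv (psum (lin_s c d) q 3)) (psum (cconj (lin c d)) q 2).

Definition in_classical_Mob (f : quat -> quat) : Prop :=
  exists a b c d, inSp11 a b c d /\ forall q, inB q -> f q = mobF a b c d q.

(** The *-product is taken on coefficient sequences: alpha is the power series
    expansion on B of the slice regular function l_{c,d}^{-*}, and calF_A is the
    sum on B of the series with coefficients alpha * (coefficients of l_{a,b}). *)
Definition in_regular_Mob (f : quat -> quat) : Prop :=
  exists a b c d, inSp11 a b c d /\
    exists alpha : nat -> quat,
      (forall q, inB q -> series_to alpha q (lin_sinv c d q)) /\
      (forall q, inB q -> series_to (star alpha (lin a b)) q (f q)).

(* Main.v *)
Require Import Defs.
From Stdlib Require Import Reals Lra Lia Psatz.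
Open Scope R_scope.

Lemma qeq : forall p q, qr p = qr q -> qi p = qi q -> qj p = qj q -> qk p = qk q -> p = q.
Proof. intros [] []; simpl; intros; subst; reflexivity. Qed.

Ltac qring := apply qeq; simpl; ring.

Lemma qmul_assoc p q r : qmul p (qmul q r) = qmul (qmul p q) r.
Proof. qring. Qed.
Lemma qnorm2_mul p q : qnorm2 (qmul p q) = qnorm2 p * qnorm2 q.
Proof. unfold qnorm2; simpl; ring. Qed.
Lemma qnorm2_ge0 p : 0 <= qnorm2 p.
Proof. unfold qnorm2; nra. Qed.
Lemma qnorm2_0 p : qnorm2 p = 0 -> p = q0.
Proof. destruct p as [a b c d]; unfold qnorm2; simpl; intros H.
  assert (a = 0) by nra; assert (b = 0) by nra; assert (c = 0) by nra; assert (d = 0) by nra.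
  subst; reflexivity. Qed.
Lemma qnorm2_neq0 p : p <> q0 -> qnorm2 p <> 0.
Proof. intros H H'; apply H, qnorm2_0, H'. Qed.
Lemma qnorm2_pos p : p <> q0 -> 0 < qnorm2 p.
Proof. intros H; pose proof (qnorm2_ge0 p); pose proof (qnorm2_neq0 p H); lra. Qed.

Lemma qinv_l p : p <> q0 -> qmul (qinv p) p = q1.
Proof. intros H; pose proof (qnorm2_neq0 p H) as N.
  unfold qinv, q1, qofR; unfold qnorm2 in *; destruct p as [a b c d]; simpl in *.
  apply qeq; simpl; field; intro E; apply N; rewrite <- E; ring. Qed.
Lemma qinv_r p : p <> q0 -> qmul p (qinv p) = q1.
Proof. intros H; pose proof (qnorm2_neq0 p H) as N.
  unfold qinv, q1, qofR; unfold qnorm2 in *; destruct p as [a b c d]; simpl in *.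
  apply qeq; simpl; field; intro E; apply N; rewrite <- E; ring. Qed.
Lemma qmul_1l p : qmul q1 p = p. Proof. qring. Qed.
Lemma qmul_1r p : qmul p q1 = p. Proof. qring. Qed.

Lemma qmul_eq0 x y : qmul x y = q0 -> y <> q0 -> x = q0.
Proof. intros H Hy. apply qnorm2_0. pose proof (qnorm2_mul x y) as E. rewrite H in E.
  assert (qnorm2 q0 = 0) by (unfold qnorm2; simpl; ring).
  pose proof (qnorm2_pos y Hy). nra. Qed.
Lemma qmul_neq0 x y : x <> q0 -> y <> q0 -> qmul x y <> q0.
Proof. intros Hx Hy H. apply Hx. exact (qmul_eq0 x y H Hy). Qed.

Lemma inv_unique L X : qmul L X = q1 -> L = qinv X.
Proof. intros H.
  assert (HX : X <> q0).
  { intros E; subst. assert (qmul L q0 = q0) by qring. rewrite H in H0.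
    unfold q1, q0, qofR in H0. injection H0; lra. }
  rewrite <- (qmul_1l (qinv X)), <- H, <- qmul_assoc, qinv_r by exact HX. symmetry; apply qmul_1r. Qed.

Lemma qinv_mul p q : p <> q0 -> q <> q0 -> qinv (qmul p q) = qmul (qinv q) (qinv p).
Proof. intros Hp Hq. symmetry; apply inv_unique.
  rewrite <- qmul_assoc, (qmul_assoc (qinv p)), qinv_l by exact Hp.
  rewrite qmul_1l. apply qinv_l, Hq. Qed.

Lemma qinv_scal l Z : l <> 0 -> Z <> q0 -> qinv (qmul (qofR l) Z) = qmul (qofR (/ l)) (qinv Z).
Proof. intros Hl HZ. symmetry; apply inv_unique.
  replace (qmul (qmul (qofR (/ l)) (qinv Z)) (qmul (qofR l) Z)) with (qmul (qofR (/l * l)) (qmul (qinv Z) Z)) by qring.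
  rewrite qinv_l by exact HZ. rewrite Rinv_l by exact Hl. qring. Qed.

Definition qcv (s : nat -> quat) (L : quat) : Prop :=
  Un_cv (fun n => qr (s n)) (qr L) /\ Un_cv (fun n => qi (s n)) (qi L) /\
  Un_cv (fun n => qj (s n)) (qj L) /\ Un_cv (fun n => qk (s n)) (qk L).

Lemma Un_cv_ext u v l : (forall n, u n = v n) -> Un_cv u l -> Un_cv v l.
Proof. intros E H eps Heps. destruct (H eps Heps) as [N HN]. exists N. intros n Hn.
  rewrite <- E. auto. Qed.
Lemma Un_cv_const c : Un_cv (fun _ => c) c.
Proof. intros eps Heps. exists O. intros. unfold R_dist. rewrite Rminus_diag, Rabs_R0. lra. Qed.


Lemma qcv_ext s t L : (forall n, s n = t n) -> qcv s L -> qcv t L.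
Proof. intros E [H1 [H2 [H3 H4]]]; repeat split; eapply Un_cv_ext; try eassumption;
  intros n; simpl; rewrite E; reflexivity. Qed.
Lemma qcv_unique s L1 L2 : qcv s L1 -> qcv s L2 -> L1 = L2.
Proof. intros [a1 [b1 [c1 d1]]] [a2 [b2 [c2 d2]]]. apply qeq; eapply UL_sequence; eassumption. Qed.
Lemma qcv_const c : qcv (fun _ => c) c.
Proof. repeat split; apply Un_cv_const. Qed.
Lemma cv_opp u l : Un_cv u l -> Un_cv (fun n => - u n) (- l).
Proof. intros H eps He; destruct (H eps He) as [N HN]; exists N; intros n Hn; unfold R_dist in *.
  replace (-u n - - l) with (-(u n - l)) by ring; rewrite Rabs_Ropp; auto. Qed.
Ltac cvt := repeat (first [ assumption | apply Un_cv_const | apply CV_minus | apply CV_plus | apply CV_mult | apply cv_opp ]).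
Lemma qcv_add s t L M : qcv s L -> qcv t M -> qcv (fun n => qadd (s n) (t n)) (qadd L M).
Proof. intros [a1 [b1 [c1 d1]]] [a2 [b2 [c2 d2]]]; repeat split; simpl; cvt. Qed.
Lemma qcv_sub s t L M : qcv s L -> qcv t M -> qcv (fun n => qsub (s n) (t n)) (qsub L M).
Proof. intros [a1 [b1 [c1 d1]]] [a2 [b2 [c2 d2]]]; repeat split; simpl;
  apply CV_plus; try assumption; apply cv_opp; assumption. Qed.
Lemma qcv_mul s t L M : qcv s L -> qcv t M -> qcv (fun n => qmul (s n) (t n)) (qmul L M).
Proof. intros [a1 [b1 [c1 d1]]] [a2 [b2 [c2 d2]]]; repeat split; simpl; cvt. Qed.

Lemma qcv_shift s L : qcv (fun n => s (S n)) L -> qcv s L.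
Proof. unfold qcv; intros [a [b [c d]]];
  repeat split; intros eps Heps;
  [destruct (a eps Heps) as [N HN]|destruct (b eps Heps) as [N HN]|destruct (c eps Heps) as [N HN]|destruct (d eps Heps) as [N HN]];
  exists (S N); intros n Hn; destruct n; try lia; apply HN; lia. Qed.

Lemma comp_le x y z w : Rabs x <= sqrt (x^2 + y^2 + z^2 + w^2).
Proof. rewrite <- sqrt_Rsqr_abs. apply sqrt_le_1_alt. unfold Rsqr. nra. Qed.
Lemma comp_r p : Rabs (qr p) <= qnorm p.
Proof. unfold qnorm, qnorm2. apply comp_le. Qed.
Lemma comp_i p : Rabs (qi p) <= qnorm p.
Proof. unfold qnorm, qnorm2. replace (qr p ^ 2 + qi p ^ 2 + qj p ^ 2 + qk p ^ 2) with (qi p ^ 2 + qr p ^ 2 + qj p ^ 2 + qk p ^ 2) by ring. apply comp_le. Qed.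
Lemma comp_j p : Rabs (qj p) <= qnorm p.
Proof. unfold qnorm, qnorm2. replace (qr p ^ 2 + qi p ^ 2 + qj p ^ 2 + qk p ^ 2) with (qj p ^ 2 + qi p ^ 2 + qr p ^ 2 + qk p ^ 2) by ring. apply comp_le. Qed.
Lemma comp_k p : Rabs (qk p) <= qnorm p.
Proof. unfold qnorm, qnorm2. replace (qr p ^ 2 + qi p ^ 2 + qj p ^ 2 + qk p ^ 2) with (qk p ^ 2 + qi p ^ 2 + qj p ^ 2 + qr p ^ 2) by ring. apply comp_le. Qed.
Lemma qnorm_ge0 p : 0 <= qnorm p.
Proof. apply sqrt_pos. Qed.

Definition qlim (s : nat -> quat) (L : quat) := Un_cv (fun N => qnorm (qsub (s N) L)) 0.

Lemma qlim_qcv s L : qlim s L -> qcv s L.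
Proof. unfold qlim. intros H.
  repeat split; intros eps Heps; destruct (H eps Heps) as [N HN]; exists N; intros n Hn;
  specialize (HN n Hn); unfold R_dist in *; rewrite Rminus_0_r in HN;
  rewrite Rabs_pos_eq in HN by apply qnorm_ge0.
  - pose proof (comp_r (qsub (s n) L)) as C; simpl in C; unfold Rminus; lra.
  - pose proof (comp_i (qsub (s n) L)) as C; simpl in C; unfold Rminus; lra.
  - pose proof (comp_j (qsub (s n) L)) as C; simpl in C; unfold Rminus; lra.
  - pose proof (comp_k (qsub (s n) L)) as C; simpl in C; unfold Rminus; lra.
Qed.

Lemma qcv_qlim s L : qcv s L -> qlim s L.
Proof. intros H. pose proof (qcv_sub _ _ _ _ H (qcv_const L)) as [a [b [c d]]].
  unfold qlim, qnorm, qnorm2. rewrite <- sqrt_0.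
  apply continuity_seq; [apply continuity_pt_sqrt; lra|].
  replace 0 with (qr (qsub L L) ^ 2 + qi (qsub L L) ^ 2 + qj (qsub L L) ^ 2 + qk (qsub L L) ^ 2) by (simpl; ring).
  cvt; simpl; rewrite Rmult_1_r; cvt.
Qed.

Fixpoint AB (x m : R) (n : nat) : R * R :=
  match n with O => (1, 0) | S n' => let (A, B) := AB x m n' in (- m * B, A + 2 * x * B) end.

Lemma qpow_AB q n : qpow q n = qadd (qofR (fst (AB (qr q) (qnorm2 q) n))) (qmul (qofR (snd (AB (qr q) (qnorm2 q) n))) q).
Proof. induction n as [|n IH]; simpl.
  - qring.
  - rewrite IH. destruct (AB (qr q) (qnorm2 q) n) as [A B]. unfold qnorm2. qring. Qed.

Definition Pp (b : nat -> quat) x m N := qsum (fun n => qmul (qofR (fst (AB x m n))) (b n)) N.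
Definition Qp (b : nat -> quat) x m N := qsum (fun n => qmul (qofR (snd (AB x m n))) (b n)) N.

Lemma psum_PQ b q N : psum b q N = qadd (Pp b (qr q) (qnorm2 q) N) (qmul q (Qp b (qr q) (qnorm2 q) N)).
Proof. induction N as [|N IH]; simpl.
  - unfold Pp, Qp; simpl. qring.
  - rewrite IH, qpow_AB. unfold Pp, Qp; simpl. qring. Qed.

Definition Tm (q q' X Y : quat) : quat :=
  qadd X (qmul (qsub q' q) (qmul (qinv (qsub q (qconj q))) (qsub X Y))).

Lemma psum_T b q q' N : qr q = qr q' -> qnorm2 q = qnorm2 q' -> qsub q (qconj q) <> q0 ->
  psum b q' N = Tm q q' (psum b q N) (psum b (qconj q) N).
Proof. intros E1 E2 Hq. unfold Tm.
  assert (Ec1 : qr (qconj q) = qr q) by reflexivity.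
  assert (Ec2 : qnorm2 (qconj q) = qnorm2 q) by (unfold qnorm2; simpl; ring).
  rewrite !psum_PQ, Ec1, Ec2, <- E1, <- E2.
  set (P := Pp b (qr q) (qnorm2 q) N). set (Q := Qp b (qr q) (qnorm2 q) N).
  replace (qsub (qadd P (qmul q Q)) (qadd P (qmul (qconj q) Q))) with (qmul (qsub q (qconj q)) Q) by qring.
  rewrite (qmul_assoc (qinv (qsub q (qconj q)))), qinv_l by exact Hq. rewrite qmul_1l. qring. Qed.

Lemma inB_norm2 q : inB q <-> qnorm2 q < 1.
Proof. unfold inB, qnorm. split; intros H.
  - pose proof (qnorm2_ge0 q). rewrite <- sqrt_1 in H. apply sqrt_lt_0_alt in H. exact H.
  - rewrite <- sqrt_1. apply sqrt_lt_1_alt. split; [apply qnorm2_ge0| exact H]. Qed.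

Lemma repr (b : nat -> quat) (f : quat -> quat) q q' :
  (forall z, inB z -> series_to b z (f z)) -> inB q -> inB q' ->
  qr q = qr q' -> qnorm2 q = qnorm2 q' -> qsub q (qconj q) <> q0 ->
  f q' = Tm q q' (f q) (f (qconj q)).
Proof. intros Hs Bq Bq' E1 E2 Hq.
  assert (Bc : inB (qconj q)) by (apply inB_norm2; apply inB_norm2 in Bq; unfold qnorm2 in *; simpl; nra).
  pose proof (qlim_qcv _ _ (Hs _ Bq')) as H'.
  pose proof (qlim_qcv _ _ (Hs _ Bq)) as H1.
  pose proof (qlim_qcv _ _ (Hs _ Bc)) as H2.
  apply (qcv_unique (psum b q')); [exact H'|].
  eapply qcv_ext. { intro n; symmetry; apply psum_T; eassumption. }
  unfold Tm. apply qcv_add; [exact H1|]. apply qcv_mul; [apply qcv_const|].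
  apply qcv_mul; [apply qcv_const|]. apply qcv_sub; assumption. Qed.

Lemma SD (y : R) (a b c d al be I : quat) :
  qmul (qadd (qmul (qmul (qofR y) I) c) d) (qadd al (qmul I be)) = qadd (qmul (qmul (qofR y) I) a) b ->
  qmul (qadd (qmul (qmul (qofR y) (qopp I)) c) d) (qadd al (qmul (qopp I) be)) = qadd (qmul (qmul (qofR y) (qopp I)) a) b ->
  qadd (qmul d al) (qmul (qofR y) (qmul I (qmul c (qmul I be)))) = b /\
  qmul d (qmul I be) = qmul I (qmul (qofR y) (qsub a (qmul c al))).
Proof. intros Ep Em.
  pose proof (f_equal qr Ep) as E1; pose proof (f_equal qi Ep) as E2;
  pose proof (f_equal qj Ep) as E3; pose proof (f_equal qk Ep) as E4;
  pose proof (f_equal qr Em) as F1; pose proof (f_equal qi Em) as F2;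
  pose proof (f_equal qj Em) as F3; pose proof (f_equal qk Em) as F4.
  simpl in *. split; apply qeq; simpl; lra. Qed.

Definition ui := Quat 0 1 0 0.
Definition uj := Quat 0 0 1 0.
Definition uk := Quat 0 0 0 1.

Lemma normconj a : qr (qmul (qconj a) a) = qnorm2 a.
Proof. unfold qnorm2; simpl; ring. Qed.

Lemma quat0 a b c d : Quat a b c d = q0 -> a = 0 /\ b = 0 /\ c = 0 /\ d = 0.
Proof. unfold q0, qofR. intros H; injection H; intros; subst; auto. Qed.

Lemma core (y : R) (a b c d al be : quat) : y <> 0 ->
  qnorm2 a - qnorm2 b = 1 -> qnorm2 c - qnorm2 d = -1 ->
  (forall I, I = ui \/ I = uj \/ I = uk ->
    qadd (qmul d al) (qmul (qofR y) (qmul I (qmul c (qmul I be)))) = b /\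
    qmul d (qmul I be) = qmul I (qmul (qofR y) (qsub a (qmul c al)))) ->
  qi d = 0 /\ qj d = 0 /\ qk d = 0 /\ qi (qmul c (qinv d)) = 0 /\ qj (qmul c (qinv d)) = 0 /\ qk (qmul c (qinv d)) = 0.
Proof. intros Hy Nab Ncd H.
  assert (Hd : d <> q0).
  { intros E; subst. assert (qnorm2 q0 = 0) by (unfold qnorm2; simpl; ring). pose proof (qnorm2_ge0 c). lra. }
  set (C := qmul (qofR y) (qsub a (qmul c al))) in *.
  set (e := qinv d).
  assert (HB : forall I, I = ui \/ I = uj \/ I = uk -> qmul I be = qmul e (qmul I C)).
  { intros I HI. destruct (H I HI) as [_ D]. rewrite <- D, qmul_assoc. unfold e. rewrite qinv_l by exact Hd. symmetry; apply qmul_1l. }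
  assert (HC : C <> q0).
  { intros E. assert (Hbe : be = q0).
    { pose proof (HB ui (or_introl eq_refl)) as Hi. rewrite E in Hi.
      apply qeq; [apply (f_equal qi) in Hi | apply (f_equal qr) in Hi | apply (f_equal qk) in Hi | apply (f_equal qj) in Hi];
      unfold ui, q0, qofR in *; simpl in *; lra. }
    destruct (H ui (or_introl eq_refl)) as [S _]. rewrite Hbe in S.
    assert (Eb : b = qmul d al) by (rewrite <- S; qring).
    assert (Ea : a = qmul c al).
    { unfold C in E. apply qeq; [apply (f_equal qr) in E | apply (f_equal qi) in E | apply (f_equal qj) in E | apply (f_equal qk) in E];
      unfold q0, qofR in E; simpl in *; apply (Rmult_eq_reg_l y); try exact Hy; lra. }
    rewrite Ea, Eb, !qnorm2_mul in Nab. pose proof (qnorm2_ge0 al). nra. }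
  set (W := qmul c e).
  assert (HS : forall I, I = ui \/ I = uj \/ I = uk -> qadd (qmul d al) (qmul (qofR y) (qmul I (qmul W (qmul I C)))) = b).
  { intros I HI. destruct (H I HI) as [S _]. rewrite HB in S by exact HI. unfold W. rewrite <- qmul_assoc. exact S. }
  pose proof (HS ui (or_introl eq_refl)) as Si.
  pose proof (HS uj (or_intror (or_introl eq_refl))) as Sj.
  pose proof (HS uk (or_intror (or_intror eq_refl))) as Sk.
  assert (G1 : qmul (Quat 0 (-2 * qi W) (2 * qj W) 0) C = q0).
  { rewrite <- Sj in Si. 
    apply qeq; [apply (f_equal qr) in Si | apply (f_equal qi) in Si | apply (f_equal qj) in Si | apply (f_equal qk) in Si];
    unfold ui, uj in Si; simpl in *; apply (Rmult_eq_reg_l y); try exact Hy; lra. }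
  assert (G2 : qmul (Quat 0 (-2 * qi W) 0 (2 * qk W)) C = q0).
  { rewrite <- Sk in Si. 
    apply qeq; [apply (f_equal qr) in Si | apply (f_equal qi) in Si | apply (f_equal qj) in Si | apply (f_equal qk) in Si];
    unfold ui, uk in Si; simpl in *; apply (Rmult_eq_reg_l y); try exact Hy; lra. }
  pose proof (HB ui (or_introl eq_refl)) as Bi.
  pose proof (HB uj (or_intror (or_introl eq_refl))) as Bj.
  pose proof (HB uk (or_intror (or_intror eq_refl))) as Bk.
  assert (G3 : qmul (Quat 0 (-2 * qi e) (2 * qj e) 0) C = q0).
  { apply qeq; 
    [pose proof (f_equal qr Bi); pose proof (f_equal qi Bi); pose proof (f_equal qj Bi); pose proof (f_equal qk Bi);
     pose proof (f_equal qr Bj); pose proof (f_equal qi Bj); pose proof (f_equal qj Bj); pose proof (f_equal qk Bj);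
     unfold ui, uj in *; simpl in *; lra ..]. }
  assert (G4 : qmul (Quat 0 (-2 * qi e) 0 (2 * qk e)) C = q0).
  { apply qeq; 
    [pose proof (f_equal qr Bi); pose proof (f_equal qi Bi); pose proof (f_equal qj Bi); pose proof (f_equal qk Bi);
     pose proof (f_equal qr Bk); pose proof (f_equal qi Bk); pose proof (f_equal qj Bk); pose proof (f_equal qk Bk);
     unfold ui, uk in *; simpl in *; lra ..]. }
  apply qmul_eq0 in G1, G2, G3, G4; try exact HC.
  apply quat0 in G1 as [_ [G1a [G1b _]]]. apply quat0 in G2 as [_ [_ [_ G2c]]].
  apply quat0 in G3 as [_ [G3a [G3b _]]]. apply quat0 in G4 as [_ [_ [_ G4c]]].
  assert (Ne : 0 < qnorm2 d) by (apply qnorm2_pos; exact Hd).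
  assert (E1 : qi e = - qi d * / qnorm2 d) by (unfold e, qinv; simpl; ring).
  assert (E2 : qj e = - qj d * / qnorm2 d) by (unfold e, qinv; simpl; ring).
  assert (E3 : qk e = - qk d * / qnorm2 d) by (unfold e, qinv; simpl; ring).
  assert (Ni : 0 < / qnorm2 d) by (apply Rinv_0_lt_compat; exact Ne).
  repeat split; try lra; nra.
Qed.

Lemma tanh_inv w : -1 < w < 1 -> exists t, sinh t = w * cosh t.
Proof. intros Hw. set (t := ln ((1 + w) / (1 - w)) / 2). exists t.
  assert (Hp : 0 < (1 + w) / (1 - w)) by (apply Rdiv_lt_0_compat; lra).
  assert (E2 : exp t * exp t = (1 + w) / (1 - w)).
  { rewrite <- exp_plus. replace (t + t) with (ln ((1 + w) / (1 - w))) by (unfold t; field). apply exp_ln, Hp. }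
  unfold sinh, cosh. rewrite exp_Ropp. pose proof (exp_pos t) as P.
  set (E := exp t) in *. apply (Rmult_eq_reg_l (2 * E)); [|lra].
  field_simplify; [|lra|lra].
  assert (E * E * (1 - w) = 1 + w) by (rewrite E2; field; lra).
  nra. Qed.

Lemma cosh_pos t : 0 < cosh t.
Proof. unfold cosh. pose proof (exp_pos t); pose proof (exp_pos (-t)). lra. Qed.
Lemma cosh_sinh t : cosh t * cosh t - sinh t * sinh t = 1.
Proof. unfold cosh, sinh. rewrite exp_Ropp. pose proof (exp_pos t). field. lra. Qed.

Lemma X_neq0 c d p : qnorm2 c - qnorm2 d = -1 -> qnorm2 p < 1 -> qadd (qmul p c) d <> q0.
Proof. intros E Hp H.
  assert (H' : qmul p c = qopp d).
  { apply qeq; [apply (f_equal qr) in H|apply (f_equal qi) in H|apply (f_equal qj) in H|apply (f_equal qk) in H];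
    unfold q0, qofR in H; simpl in *; lra. }
  apply (f_equal qnorm2) in H'. rewrite qnorm2_mul in H'.
  assert (qnorm2 (qopp d) = qnorm2 d) by (unfold qnorm2; simpl; ring).
  pose proof (qnorm2_ge0 p); pose proof (qnorm2_ge0 c). nra. Qed.

Lemma forward (f : quat -> quat) a b c d (be : nat -> quat) :
  inSp11 a b c d -> (forall q, inB q -> f q = mobF a b c d q) ->
  (forall z, inB z -> series_to be z (f z)) ->
  exists t u, inSp1 u /\ forall q, inB q -> f q = qmul (mobH t q) u.
Proof. intros [H1 [H2 [H3 H4]]] Hf Hs.
  assert (Nab : qnorm2 a - qnorm2 b = 1).
  { apply (f_equal qr) in H1. unfold q1, qofR, qnorm2 in *; simpl in *. lra. }
  assert (Ncd : qnorm2 c - qnorm2 d = -1).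
  { apply (f_equal qr) in H4. unfold q1, qofR, qnorm2 in *; simpl in *. lra. }
  set (r := Quat 0 (/2) 0 0).
  assert (Br : inB r) by (apply inB_norm2; unfold r, qnorm2; simpl; lra).
  assert (Hr : qsub r (qconj r) <> q0).
  { unfold r, q0, qofR, qsub, qadd, qopp, qconj; simpl. intros E; injection E; lra. }
  set (Qv := qmul (qinv (qsub r (qconj r))) (qsub (f r) (f (qconj r)))).
  set (al := qsub (f r) (qmul r Qv)).
  set (be' := qmul (qofR (/2)) Qv).
  assert (pt : forall I, qr I = 0 -> qnorm2 I = 1 ->
     qmul (qadd (qmul (qmul (qofR (/2)) I) c) d) (qadd al (qmul I be')) = qadd (qmul (qmul (qofR (/2)) I) a) b).
  { intros I HI0 HI1. set (p := qmul (qofR (/2)) I).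
    assert (Np : qnorm2 p = / 4) by (unfold p; rewrite qnorm2_mul, HI1; unfold qnorm2; simpl; field).
    assert (Bp : inB p) by (apply inB_norm2; lra).
    assert (Ep : f p = qadd al (qmul I be')).
    { rewrite (repr be f r p Hs Br Bp); try assumption.
      - unfold Tm. fold Qv. unfold al, be', p, r. apply qeq; simpl; rewrite HI0; ring.
      - unfold p; simpl; rewrite HI0; unfold r; simpl; ring.
      - rewrite Np; unfold r, qnorm2; simpl; field. }
    rewrite <- Ep, (Hf p Bp). unfold mobF.
    rewrite qmul_assoc, qinv_r. apply qmul_1l.
    apply X_neq0; [exact Ncd| lra]. }
  assert (HSD : forall I, I = ui \/ I = uj \/ I = uk ->
    qadd (qmul d al) (qmul (qofR (/2)) (qmul I (qmul c (qmul I be')))) = b /\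
    qmul d (qmul I be') = qmul I (qmul (qofR (/2)) (qsub a (qmul c al)))).
  { intros I HI. apply SD; apply pt.
    all: destruct HI as [E|[E|E]]; subst I; unfold ui, uj, uk, qnorm2; simpl; ring. }
  destruct (core (/2) a b c d al be') as [d1 [d2 [d3 [w1 [w2 w3]]]]]; try assumption.
  { apply Rinv_neq_0_compat; lra. }
  assert (Hd : d <> q0).
  { intros E; subst. assert (qnorm2 q0 = 0) by (unfold qnorm2; simpl; ring). pose proof (qnorm2_ge0 c). lra. }
  set (w := qr (qmul c (qinv d))) in *.
  set (d0 := qr d) in *.
  assert (Ed : d = qofR d0) by (apply qeq; simpl; auto).
  assert (Ec : c = qofR (w * d0)).
  { assert (c = qmul (qmul c (qinv d)) d) as ->.
    { rewrite <- qmul_assoc, qinv_l by exact Hd. symmetry; apply qmul_1r. }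
    assert (qmul c (qinv d) = qofR w) as -> by (apply qeq; simpl; auto).
    rewrite Ed. qring. }
  assert (Nd : qnorm2 d = d0 * d0) by (rewrite Ed; unfold qnorm2; simpl; ring).
  assert (Hd0 : d0 <> 0) by (intro E; rewrite E in Nd; apply Hd, qnorm2_0; lra).
  assert (Eb : b = qmul (qofR w) a).
  { rewrite Ec, Ed in H2.
    apply qeq; [apply (f_equal qr) in H2|apply (f_equal qi) in H2|apply (f_equal qj) in H2|apply (f_equal qk) in H2];
    unfold q0, qofR in H2; simpl in *; apply (Rmult_eq_reg_l d0); try exact Hd0; lra. }
  assert (Nb : qnorm2 b = w * w * qnorm2 a) by (rewrite Eb, qnorm2_mul; unfold qnorm2; simpl; ring).
  assert (Nc : qnorm2 c = w * w * (d0 * d0)) by (rewrite Ec; unfold qnorm2; simpl; ring).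
  assert (K1 : d0 * d0 * (1 - w * w) = 1) by (rewrite Nc, Nd in Ncd; lra).
  assert (K2 : qnorm2 a * (1 - w * w) = 1) by (rewrite Nb in Nab; lra).
  assert (Hww : w * w < 1).
  { destruct (Rlt_or_le (w * w) 1) as [h|h]; [exact h|].
    assert (0 <= d0 * d0) by nra. nra. }
  assert (Hw : -1 < w < 1) by (split; nra).
  assert (Na : qnorm2 a = d0 * d0).
  { apply (Rmult_eq_reg_r (1 - w * w)); [lra|lra]. }
  destruct (tanh_inv w Hw) as [t Ht].
  exists t, (qmul (qofR (/ d0)) a). split.
  { unfold inSp1, qnorm. rewrite qnorm2_mul, Na. unfold qnorm2 at 1; simpl.
    match goal with |- sqrt ?x = _ => replace x with 1 by (field; exact Hd0) end; apply sqrt_1. }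
  intros q Bq. rewrite (Hf q Bq). unfold mobH, mobF.
  apply inB_norm2 in Bq.
  set (Z := qadd (qmul q (qofR w)) q1).
  assert (HZ : Z <> q0).
  { intro E. apply (f_equal qr) in E. unfold Z, q0, q1, qofR, qnorm2 in *; simpl in *. nra. }
  assert (qadd (qmul q c) d = qmul (qofR d0) Z) as -> by (rewrite Ec, Ed; unfold Z; qring).
  assert (qadd (qmul q (qofR (sinh t))) (qofR (cosh t)) = qmul (qofR (cosh t)) Z) as -> by (rewrite Ht; unfold Z; qring).
  pose proof (cosh_pos t) as Pc.
  rewrite !qinv_scal by (try exact HZ; lra).
  rewrite Eb, Ht. clearbody Z. set (IZ := qinv Z). clearbody IZ.
  apply qeq; simpl; field; lra.
Qed.

Lemma qnorm2_pow z n : qnorm2 (qpow z n) = qnorm2 z ^ n.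
Proof. induction n; simpl. - unfold qnorm2; simpl; ring. - rewrite qnorm2_mul, IHn; ring. Qed.

Lemma cv_geom_bound (u : nat -> R) rho : 0 <= rho < 1 -> (forall n, u n * u n <= rho ^ n) -> Un_cv u 0.
Proof. intros Hr Hu eps Heps.
  destruct (pow_lt_1_zero rho ltac:(rewrite Rabs_pos_eq; lra) (eps * eps) ltac:(nra)) as [N HN].
  exists N; intros n Hn. specialize (HN n Hn). specialize (Hu n).
  rewrite Rabs_pos_eq in HN by (apply pow_le; lra).
  unfold R_dist. rewrite Rminus_0_r. destruct (Rcase_abs (u n)) as [h|h];
  [rewrite Rabs_left by exact h | rewrite Rabs_pos_eq by lra]; nra. Qed.

Lemma qcv_pow0 z : qnorm2 z < 1 -> qcv (qpow z) q0.
Proof. intros Hz. pose proof (qnorm2_ge0 z).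
  repeat split; apply (cv_geom_bound _ (qnorm2 z)); try lra; intros n; rewrite <- qnorm2_pow;
  unfold qnorm2; set (p := qpow z n); nra. Qed.

Lemma qpow_scal q r n : qpow (qmul q (qofR r)) n = qmul (qpow q n) (qofR (r ^ n)).
Proof. induction n; simpl. - qring. - rewrite IHn. qring. Qed.

Lemma qpow_comm q n : qmul q (qpow q n) = qmul (qpow q n) q.
Proof. induction n; simpl. - qring. - rewrite qmul_assoc, IHn. reflexivity. Qed.

Lemma star_lin al a b n : star al (lin a b) (S n) = qadd (qmul (al (S n)) b) (qmul (al n) a).
Proof. unfold star. cbn [qsum]. replace (S n - S n)%nat with O by lia. replace (S n - n)%nat with 1%nat by lia.
  assert (Z : qsum (fun k => qmul (al k) (lin a b (S n - k))) n = q0).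
  { assert (G : forall m, (m <= n)%nat -> qsum (fun k => qmul (al k) (lin a b (S n - k))) m = q0).
    { induction m; intros Hm; cbn [qsum]. - reflexivity.
      - rewrite IHm by lia. replace (S n - m)%nat with (S (S (n - S m))) by lia. simpl. qring. }
    apply G; lia. }
  rewrite Z. simpl. qring. Qed.

Lemma star_lin0 al a b : star al (lin a b) O = qmul (al O) b.
Proof. unfold star; simpl. qring. Qed.

Lemma psum_star al a b q N :
  psum (star al (lin a b)) q (S N) = qadd (qmul (psum al q (S N)) b) (qmul q (qmul (psum al q N) a)).
Proof. induction N.
  - simpl. rewrite star_lin0. qring.
  - change (psum (star al (lin a b)) q (S (S N))) with (qadd (psum (star al (lin a b)) q (S N)) (qmul (qpow q (S N)) (star al (lin a b) (S N)))).
    rewrite IHN, star_lin.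
    change (psum al q (S (S N))) with (qadd (psum al q (S N)) (qmul (qpow q (S N)) (al (S N)))).
    change (qpow q (S N)) with (qmul (qpow q N) q).
    rewrite <- (qpow_comm q N).
    change (psum al q (S N)) with (qadd (psum al q N) (qmul (qpow q N) (al N))).
    set (P := psum al q N). set (Q := qpow q N). clearbody P Q. qring. Qed.

Lemma qcv_shift_r s L : qcv s L -> qcv (fun n => s (S n)) L.
Proof. unfold qcv; intros [a [b [c d]]];
  repeat split; intros eps Heps;
  [destruct (a eps Heps) as [N HN]|destruct (b eps Heps) as [N HN]|destruct (c eps Heps) as [N HN]|destruct (d eps Heps) as [N HN]];
  exists N; intros n Hn; apply HN; lia. Qed.

Definition galpha (rr ch : R) : nat -> quat := fun n => qofR (rr ^ n * / ch).

Lemma PX q ch rr : ch <> 0 -> forall N,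
  qmul (psum (galpha rr ch) q N) (qadd (qmul q (qofR (- rr * ch))) (qofR ch)) = qsub q1 (qpow (qmul q (qofR rr)) N).
Proof. intros Hch N. induction N.
  - simpl. qring.
  - change (psum (galpha rr ch) q (S N)) with (qadd (psum (galpha rr ch) q N) (qmul (qpow q N) (galpha rr ch N))).
    set (X := qadd (qmul q (qofR (- rr * ch))) (qofR ch)) in *.
    replace (qmul (qadd (psum (galpha rr ch) q N) (qmul (qpow q N) (galpha rr ch N))) X)
      with (qadd (qmul (psum (galpha rr ch) q N) X) (qmul (qmul (qpow q N) (galpha rr ch N)) X)) by qring.
    rewrite IHN. change (qpow (qmul q (qofR rr)) (S N)) with (qmul (qpow (qmul q (qofR rr)) N) (qmul q (qofR rr))).
    rewrite qpow_scal. unfold X, galpha. set (Q := qpow q N). clearbody Q. set (R0 := rr ^ N). clearbody R0.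
    apply qeq; simpl; field; exact Hch. Qed.

Lemma backward (f : quat -> quat) t u : inSp1 u ->
  (forall q, inB q -> f q = qmul (mobH t q) u) -> in_classical_Mob f /\ in_regular_Mob f.
Proof. intros Hu Hf.
  assert (Hu2 : qnorm2 u = 1).
  { unfold inSp1, qnorm in Hu. rewrite <- (sqrt_sqrt (qnorm2 u)) by apply qnorm2_ge0. rewrite Hu; ring. }
  pose proof (cosh_sinh t) as Hcs. pose proof (cosh_pos t) as Hch.
  set (s := sinh t) in *. set (ch := cosh t) in *.
  set (a := qmul (qofR ch) u). set (b := qmul (qofR s) u). set (c := qofR s). set (d := qofR ch).
  assert (HSp : inSp11 a b c d).
  { unfold inSp11, a, b, c, d. split; [|split; [|split]].
    - apply qeq; simpl; try ring.
      transitivity ((ch * ch - s * s) * qnorm2 u); [unfold qnorm2; simpl; ring| rewrite Hcs, Hu2; ring].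
    - qring. - qring.
    - apply qeq; simpl; try ring. lra. }
  assert (HX : forall q, inB q -> qadd (qmul q (qofR s)) (qofR ch) <> q0).
  { intros q Bq E. apply inB_norm2 in Bq. apply (f_equal qr) in E. unfold q0, qofR, qnorm2 in *; simpl in *.
    assert (s * s < ch * ch) by lra. nra. }
  split.
  { exists a, b, c, d. split; [exact HSp|]. intros q Bq. rewrite (Hf q Bq). unfold mobH, mobF, a, b, c, d.
    fold s ch. set (IZ := qinv (qadd (qmul q (qofR s)) (qofR ch))). clearbody IZ. qring. }
  set (rr := - s / ch).
  assert (Es : s = - rr * ch) by (unfold rr; field; lra).
  assert (Hrr : rr * rr < 1).
  { unfold rr. replace (- s / ch * (- s / ch)) with ((s * s) / (ch * ch)) by (field; lra).
    apply (Rmult_lt_reg_r (ch * ch)); [nra|]. unfold Rdiv; rewrite Rmult_assoc, Rinv_l by nra. lra. }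
  assert (Lal : forall q, inB q -> qcv (psum (galpha rr ch) q) (qinv (qadd (qmul q (qofR s)) (qofR ch)))).
  { intros q Bq. set (X := qadd (qmul q (qofR s)) (qofR ch)).
    assert (E : forall N, psum (galpha rr ch) q N = qmul (qsub q1 (qpow (qmul q (qofR rr)) N)) (qinv X)).
    { intros N. rewrite <- (PX q ch rr ltac:(lra) N). fold X.
      unfold X; rewrite Es; fold X. rewrite <- qmul_assoc, qinv_r by (unfold X; rewrite <- Es; apply HX, Bq).
      symmetry; apply qmul_1r. }
    eapply qcv_ext. { intro N; symmetry; apply E. }
    enough (H : qcv (fun N => qmul (qsub q1 (qpow (qmul q (qofR rr)) N)) (qinv X)) (qmul (qsub q1 q0) (qinv X))).
    { replace (qmul (qsub q1 q0) (qinv X)) with (qinv X) in H by qring. exact H. }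
    apply qcv_mul; [|apply qcv_const]. apply qcv_sub; [apply qcv_const|]. apply qcv_pow0.
    rewrite qnorm2_mul. apply inB_norm2 in Bq. assert (qnorm2 (qofR rr) = rr * rr) by (unfold qnorm2; simpl; ring).
    pose proof (qnorm2_ge0 q). nra. }
  exists a, b, c, d. split; [exact HSp|]. exists (galpha rr ch). split.
  - intros q Bq. apply qcv_qlim.
    replace (lin_sinv c d q) with (qinv (qadd (qmul q (qofR s)) (qofR ch))). { apply Lal, Bq. }
    set (X := qadd (qmul q (qofR s)) (qofR ch)).
    unfold lin_sinv.
    assert (E1 : psum (lin_s c d) q 3 = qmul X X) by (unfold lin_s, star, cconj, lin, X, c, d; apply qeq; simpl; ring).
    assert (E2 : psum (cconj (lin c d)) q 2 = X) by (unfold cconj, lin, X, c, d; apply qeq; simpl; ring).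
    rewrite E1, E2, qinv_mul by (apply HX, Bq). rewrite <- qmul_assoc, qinv_l by (apply HX, Bq).
    symmetry; apply qmul_1r.
  - intros q Bq. apply qcv_qlim. apply qcv_shift.
    eapply qcv_ext. { intro N. symmetry. apply psum_star. }
    pose proof (Lal q Bq) as L1.
    replace (f q) with (qadd (qmul (qinv (qadd (qmul q (qofR s)) (qofR ch))) b) (qmul q (qmul (qinv (qadd (qmul q (qofR s)) (qofR ch))) a))).
    + apply qcv_add. * apply qcv_mul; [apply qcv_shift_r, L1|apply qcv_const].
      * apply qcv_mul; [apply qcv_const|]. apply qcv_mul; [exact L1|apply qcv_const].
    + rewrite (Hf q Bq). unfold mobH, mobF, a, b. fold s ch. unfold qinv.
      set (N := / qnorm2 (qadd (qmul q (qofR s)) (qofR ch))). clearbody N. qring.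
Qed.

Theorem corollary3p2 :
  forall f : quat -> quat,
    (in_classical_Mob f /\ in_regular_Mob f) <->
    (exists (t : R) (u : quat), inSp1 u /\
       forall q, inB q -> f q = qmul (mobH t q) u).
Proof.
  intros f. split.
  - intros [[a [b [c [d [Sp Hf]]]]] [a' [b' [c' [d' [Sp' [al [_ Hs]]]]]]]].
    exact (forward f a b c d (star al (lin a' b')) Sp Hf Hs).
  - intros [t [u [Hu Hf]]]. exact (backward f t u Hu Hf).
Qed.
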